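(* Let $Z=(Z^i)_{i\in\mathbf{I}}$ be a time homogeneous counting process with generic intensities $\phi^i$, and for each $i$ let $\mathbf{V}^i=\{v^i_k,k\in\mathbb{N}\}$ be a coherent family of neighborhoods which is increasing ($v^i_k\subset v^i_{k+1}$ for all $k$). Let $\mathcal{Y}\subset\mathcal{X}$ be such that $$\sup_{i\in\mathbf{I}}\ \sup_{x,y\in\mathcal{Y}:\,x\overset{v^i_k}{=}y}|\phi^i(x)-\phi^i(y)|\to 0\quad (k\to\infty).$$ Define $\Delta^i_{v^i_0}(x)=\inf\{\phi^i(y):y\in\mathcal{Y},\,y\overset{v^i_0}{=}x\}$ and, for $k>0$, $\Delta^i_{v^i_k}(x)=\inf\{\phi^i(y):y\in\mathcal{Y},\,y\overset{v^i_k}{=}x\}-\inf\{\phi^i(y):y\in\mathcal{Y},\,y\overset{v^i_{k-1}}{=}x\}$. Then for any probabilities $\lambda^i$ on $\mathbf{V}^i$ such that $\lambda^i(v)=0$ only if $\sup_{x\in\mathcal{X}\cap\mathcal{Y}}\Delta^i_v(x)=0$, the process $(Z^i)$ admits the Kalikow decomposition with respect to $(\mathbf{V}^i)_{i\in\mathbf{I}}$ and $\mathcal{Y}$, with weights $\lambda^i(v)$ and cylindrical functions $\phi^i_v=\Delta^i_v/\lambda^i(v)$ (convention $0/0=0$).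
   Context: $\mathbf{I}$ is countable; $\mathcal{X}$ is the set of configurations $x=(\{t^i_n\}_n)_{i\in\mathbf{I}}$ of locally finite point sets in $(-\infty,0)$. A neighborhood is a Borel subset $v\subset\mathbf{I}\times(-\infty,0)$, finite if contained in $J\times[a,b]$ with $J$ finite; $x\overset{v}{=}y$ means $x,y$ have the same points in $v$; $f$ is cylindrical on $v$ if $f(x)=f(y)$ whenever $x\overset{v}{=}y$. A time homogeneous counting process with generic intensity $\phi^i:\mathcal{X}\to\mathbb{R}_+$ has stochastic intensity at time $t$ equal to $\phi^i$ of the past configuration before $t$ shifted so that $t$ becomes $0$. If $\mathcal{V}^i$ is the minimal subset of $\mathbf{I}\times(-\infty,0)$ on which $\phi^i$ is cylindrical, a countable family $\mathbf{V}^i$ of finite neighborhoods is coherent if $\mathcal{V}^i\subset\bigcup_{v\in\mathbf{V}^i}v$. Kalikow decomposition w.r.t. $(\mathbf{V}^i)$ and $\mathcal{Y}$: for each $i$ a probability $\lambda^i$ on $\mathbf{V}^i$ and functions $\phi^i_v\ge0$ cylindrical on $v$ with $\phi^i(x)=\sum_{v}\lambda^i(v)\phi^i_v(x)$ for all $x\in\mathcal{X}\cap\mathcal{Y}$. *)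

(* Defs.v *)
From HB Require Import structures.
From mathcomp Require Import all_boot all_order all_algebra.
From mathcomp Require Import all_classical all_reals all_analysis.
Set Implicit Arguments. Unset Strict Implicit. Unset Printing Implicit Defensive.
Import Order.TTheory GRing.Theory Num.Theory numFieldNormedType.Exports.
Local Open Scope classical_set_scope.
Local Open Scope ring_scope.

Section Defs.
Variables (R : realType) (I : countType).

(* raw configurations: for each i, a set of times *)
Definition cfg := I -> set R.

Definition Xcfg : set cfg :=
  [set x | forall i, x i `<=` [set t | t < 0] /\
           forall a b : R, finite_set (x i `&` [set t | a <= t <= b])].

Definition eqon (v : set (I * R)) (x y : cfg) : Prop :=
  forall i t, v (i, t) -> (x i t <-> y i t).

Definition cylindrical (f : cfg -> R) (v : set (I * R)) : Prop :=
  forall x y, Xcfg x -> Xcfg y -> eqon v x y -> f x = f y.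

(* neighborhood: Borel subset of I x (-oo,0) (I discrete countable) *)
Definition neighborhood (v : set (I * R)) : Prop :=
  v `<=` [set p | p.2 < 0] /\ forall i, measurable [set t : R | v (i, t)].

Definition finite_nbhd (v : set (I * R)) : Prop :=
  neighborhood v /\
  exists (J : set I) (a b : R), finite_set J /\
    v `<=` [set p | J p.1 /\ a <= p.2 <= b].

Definition minimal_cyl_set (f : cfg -> R) (W : set (I * R)) : Prop :=
  W `<=` [set p | p.2 < 0] /\ cylindrical f W /\
  forall W', W' `<=` [set p | p.2 < 0] -> cylindrical f W' -> W `<=` W'.

Definition coherent (f : cfg -> R) (V : nat -> set (I * R)) : Prop :=
  forall W, minimal_cyl_set f W -> W `<=` \bigcup_k V k.

(* inf { phi(y) : y in Y, y =v= x } in the extended reals (inf of empty = +oo) *)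
Definition infY (Y : set cfg) (f : cfg -> R) (v : set (I * R)) (x : cfg)
  : \bar R :=
  ereal_inf [set (f y)%:E | y in [set y | Y y /\ eqon v y x]].

Definition Delta (Y : set cfg) (f : cfg -> R) (V : nat -> set (I * R))
  (k : nat) (x : cfg) : \bar R :=
  match k with
  | 0 => infY Y f (V 0) x
  | k'.+1 => (infY Y f (V k'.+1) x - infY Y f (V k') x)%E
  end.

Definition oscillation (Y : set cfg) (phi : I -> cfg -> R)
  (V : I -> nat -> set (I * R)) (k : nat) : \bar R :=
  ereal_sup [set ereal_sup [set (`|phi i xy.1 - phi i xy.2|)%:E
                           | xy in [set xy : cfg * cfg |
                                    Y xy.1 /\ Y xy.2 /\ eqon (V i k) xy.1 xy.2]]
            | i in [set: I]].

Definition is_prob (lam : nat -> R) : Prop :=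
  (forall k, 0 <= lam k) /\ (\sum_(0 <= k <oo) (lam k)%:E = 1)%E.

Definition Kalikow_decomposition (Y : set cfg) (phi : I -> cfg -> R)
  (V : I -> nat -> set (I * R)) (lam : I -> nat -> R)
  (phiv : I -> nat -> cfg -> R) : Prop :=
  forall i,
    is_prob (lam i) /\
    (forall k, cylindrical (phiv i k) (V i k) /\
               forall x, Xcfg x -> 0 <= phiv i k x) /\
    (forall x, Xcfg x -> Y x ->
       (fun n => \sum_(k < n) lam i k * phiv i k x) @ \oo --> phi i x).

End Defs.

(* Main.v *)
Require Import Defs.
From HB Require Import structures.
From mathcomp Require Import all_boot all_order all_algebra.
From mathcomp Require Import all_classical all_reals all_analysis.
From mathcomp Require Import lra.
Import Order.TTheory GRing.Theory Num.Theory numFieldNormedType.Exports.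
Local Open Scope classical_set_scope.
Local Open Scope ring_scope.

Section Helpers.
Variables (R : realType) (I : countType).
Variables (Y : set (cfg R I)) (f : cfg R I -> R).
Hypothesis f0 : forall x, Y x -> 0 <= f x.

Lemma eqon_sub (v w : set (I * R)) (x y : cfg R I) :
  v `<=` w -> eqon w x y -> eqon v x y.
Proof. by move=> vw e i t /vw; apply: e. Qed.

Lemma infY_ge0 v x : (0 <= infY Y f v x)%E.
Proof.
apply: le_ereal_inf_tmp => _ [y [Yy _] <-].
by rewrite lee_fin f0.
Qed.

Lemma infY_le v x : Y x -> (infY Y f v x <= (f x)%:E)%E.
Proof.
move=> Yx; apply: ereal_inf_lbound; exists x => //; split => //; move=> *; done.
Qed.

Lemma infY_mono (v w : set (I * R)) x :
  v `<=` w -> (infY Y f v x <= infY Y f w x)%E.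
Proof.
move=> vw; apply: le_ereal_inf_tmp => _ [y [Yy e] <-].
apply: ereal_inf_lbound; exists y => //; split => //.
exact: eqon_sub e.
Qed.

Lemma infY_cyl (v : set (I * R)) x x' :
  eqon v x x' -> infY Y f v x = infY Y f v x'.
Proof.
move=> e; rewrite /infY; congr ereal_inf.
apply/seteqP; split => _ [y [Yy e'] <-]; exists y => //; split => //.
- by move=> i t vt; rewrite (e' i t vt) (e i t vt).
- by move=> i t vt; rewrite (e' i t vt) -(e i t vt).
Qed.

Lemma fine_sub_ge0 (a b : \bar R) : (0 <= b)%E -> (b <= a)%E ->
  0 <= fine (a - b)%E.
Proof.
case: a => [a| |]; case: b => [b| |] //=; rewrite ?lee_fin => b0 ba //.
by rewrite subr_ge0.
Qed.

Lemma fine_le0 (a : \bar R) : (a <= 0)%E -> fine a <= 0.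
Proof. by case: a => [a| |] //=; rewrite lee_fin. Qed.

Lemma Delta_ge0 V k x : (forall k, V k `<=` V k.+1) ->
  0 <= fine (Delta Y f V k x).
Proof.
move=> Vmono; case: k => [|k] /=.
  exact/fine_ge0/infY_ge0.
apply: fine_sub_ge0; first exact: infY_ge0.
exact: infY_mono.
Qed.

End Helpers.
Arguments eqon_sub {R I v w x y}.
Arguments infY_cyl {R I Y f v x x'}.
Arguments infY_le {R I Y f v x}.
Arguments infY_ge0 {R I Y f} f0 v x.
Arguments Delta_ge0 {R I Y f} f0 V k x.

Theorem mainTheorem3 (R : realType) (I : countType)
  (phi : I -> cfg R I -> R) (V : I -> nat -> set (I * R))
  (Y : set (cfg R I)) (lam : I -> nat -> R) :
  (forall i x, @Xcfg R I x -> 0 <= phi i x) ->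
  (forall i k, finite_nbhd (V i k)) ->
  (forall i, coherent (phi i) (V i)) ->
  (forall i k, V i k `<=` V i k.+1) ->
  Y `<=` @Xcfg R I ->
  oscillation Y phi V @ \oo --> 0%E ->
  (forall i, is_prob (lam i)) ->
  (forall i k, lam i k = 0 ->
     ereal_sup [set Delta Y (phi i) (V i) k x | x in @Xcfg R I `&` Y] = 0%E) ->
  Kalikow_decomposition Y phi V lam
    (fun i k x => fine (Delta Y (phi i) (V i) k x) / lam i k).
Proof.
move=> phi0 _ _ Vmono YX osc lamP lam0 i.
have f0 : forall x, Y x -> 0 <= phi i x by move=> x /YX; apply: phi0.
split; first exact: lamP.
split.
  move=> k; split; last first.
    move=> x _; apply: divr_ge0; first exact: Delta_ge0 f0 _ _ _ (Vmono i).
    by case: (lamP i) => + _; apply.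
  move=> x x' _ _ e; congr (_ / _); congr fine.
  case: k e => [|k] e /=; first exact: infY_cyl.
  rewrite (infY_cyl e); congr (_ - _)%E.
  exact: (infY_cyl (eqon_sub (Vmono i k) e)).
move=> x Xx Yx.
have fin v : infY Y (phi i) v x \is a fin_num.
  rewrite ge0_fin_numE; last exact: infY_ge0 f0 _ _.
  exact: le_lt_trans (infY_le Yx) (ltry _).
pose g n := fine (infY Y (phi i) (V i n) x).
have term k : lam i k * (fine (Delta Y (phi i) (V i) k x) / lam i k)
    = fine (Delta Y (phi i) (V i) k x).
  have [lk0|nz] := eqVneq (lam i k) 0.
    rewrite lk0 mul0r; apply/esym/le_anti; rewrite (Delta_ge0 f0 _ _ _ (Vmono i)) andbT.
    apply: fine_le0; rewrite -(lam0 i k lk0).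
    by apply: ereal_sup_ubound; exists x.
  by rewrite mulrCA mulfV // mulr1.
have sumE n : \sum_(k < n.+1) lam i k *
    (fine (Delta Y (phi i) (V i) k x) / lam i k) = g n.
  under eq_bigr do rewrite term.
  elim: n => [|n IH]; first by rewrite big_ord1.
  rewrite big_ord_recr IH /= fineB ?fin // /g.
  by rewrite addrC subrK.
rewrite -cvg_shiftS.
apply: (cvg_trans (G := g @ \oo)); first by apply: near_eq_cvg; near=> n; rewrite /= sumE.
apply/cvgrPdist_le => eps eps0.
move/fine_cvgP: osc => [oscfin /cvgrPdist_lt /(_ eps eps0) oscsmall].
near=> n.
have hfin : oscillation Y phi V n \is a fin_num by near: n.
have hsm : `|0 - fine (oscillation Y phi V n)| < eps by near: n.
have oscn : (oscillation Y phi V n < eps%:E)%E.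
  rewrite -(fineK hfin) lte_fin; apply: le_lt_trans hsm.
  by rewrite sub0r normrN ler_norm.
have key y : Y y -> eqon (V i n) y x -> ((phi i x - eps)%:E <= (phi i y)%:E)%E.
  move=> Yy e.
  have : ((`|phi i y - phi i x|)%:E <= oscillation Y phi V n)%E.
    apply: le_trans; last first.
      by apply: ereal_sup_ubound; exists i.
    by apply: ereal_sup_ubound; exists (y, x).
  move=> /le_lt_trans /(_ oscn); rewrite lte_fin ltr_norml lee_fin => /andP[h1 h2].
  lra.
have lo : ((phi i x - eps)%:E <= infY Y (phi i) (V i n) x)%E.
  by apply: le_ereal_inf_tmp => _ [y [Yy e] <-]; apply: key.
have up := infY_le (f := phi i) (v := V i n) Yx.
rewrite -(fineK (fin (V i n))) lee_fin in lo.
rewrite -(fineK (fin (V i n))) lee_fin in up.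
rewrite /g ler_norml; apply/andP; split; lra.
Unshelve. all: by end_near.
Qed.
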